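(* Let $\mathcal{F}$ be a set of functions satisfying premise (P) below, and let $F\in\mathcal{F}$. Then for every positive integer $n$, either every closed $\{\neq_2\}\mid\{F\}$-network with exactly $n$ vertices on the $F$-side has value $0$, or every such network has nonzero value.
   Context: $\neq_2$ is the binary function with $\neq_2(x,y)=1$ if $x\neq y$ and $0$ otherwise. $\mathrm{Holant}_{\neq}(\mathcal{F})$ denotes the problem $\#\{\neq_2\}\mid\mathcal{F}$: inputs are finite bipartite multigraphs in which every vertex on one side has degree 2 and carries $\neq_2$ (so these act as edges), and every vertex $v$ on the other side (''$F$-side'') carries a function $F_v\in\mathcal{F}$ of arity $\deg(v)$ with an ordering of its incident edges; the value is $\sum_{\sigma:E\to\{0,1\}}\prod_v(\text{vertex functions})$. A gadget is such a network with dangling edges at $F$-side vertices; its function is obtained by fixing the dangling edges and summing; a function is realizable if it is the function of a gadget. Premise (P): every binary function realizable in $\mathrm{Holant}_{\neq}(\mathcal{F})$ is of the form $\lambda\cdot\neq_2$ for some $\lambda\in\mathbb{C}$, and every arity-4 function realizable in $\mathrm{Holant}_{\neq}(\mathcal{F})$ is of the form $(x_1,\dots,x_4)\mapsto\lambda\,\neq_2(x_{\tau(1)},x_{\tau(2)})\neq_2(x_{\tau(3)},x_{\tau(4)})$ for some $\lambda\in\mathbb{C}$ and some permutation $\tau$ of $\{1,2,3,4\}$. *)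

(* Defs.v *)
From HB Require Import structures.
From mathcomp Require Import all_boot all_order all_algebra all_fingroup.
Set Implicit Arguments. Unset Strict Implicit. Unset Printing Implicit Defensive.
Import GRing.Theory.
Local Open Scope ring_scope.

Section Holant.
Variable K : comNzRingType.

Record hsig := HSig { ar : nat; fn : ar.-tuple bool -> K }.

Definition neq2 (x y : bool) : K := if x != y then 1 else 0.

(* The edges of the bipartite graph are exactly the
   "half-edges" (ports) of the F-side vertices, numbered 'I_gm.
   - F-side vertices are 'I_gnv, vertex v carries function glab v, and
     gport v lists its incident edges in order (length = arity).
   - gpair h = Some h' means edges h and h' are the two edges of one
     ≠2-vertex (degree 2); gpair h = None means h is a dangling edge.
   - gdang is the ordered list of dangling edges. *)
Record gadget := Gadget {
  gm : nat;
  gnv : nat;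
  glab : 'I_gnv -> hsig;
  gport : forall v : 'I_gnv, (ar (glab v)).-tuple 'I_gm;
  gpair : 'I_gm -> option 'I_gm;
  gdang : seq 'I_gm }.

Definition wf_gadget (G : gadget) : Prop :=
  (forall (v w : 'I_(gnv G)) (i : 'I_(ar (glab v))) (j : 'I_(ar (glab w))),
      tnth (gport v) i = tnth (gport w) j -> v = w /\ (i : nat) = j) /\
  (forall h : 'I_(gm G), exists (v : 'I_(gnv G)) (i : 'I_(ar (glab v))),
      tnth (gport v) i = h) /\
  (forall h h' : 'I_(gm G), gpair h = Some h' -> h' != h /\ gpair h' = Some h) /\
  uniq (gdang G) /\
  (forall h : 'I_(gm G), (h \in gdang G) = (gpair h == None)).

(* Contribution of the ≠2-vertices (each counted once, via h < h'). *)
Definition neq_weight (G : gadget) (s : {ffun 'I_(gm G) -> bool}) : K :=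
  \prod_(h : 'I_(gm G))
     match gpair h with
     | Some h' => if (h < h')%N then neq2 (s h) (s h') else 1
     | None => 1
     end.

Definition holant_val (G : gadget) (x : seq bool) : K :=
  \sum_(s : {ffun 'I_(gm G) -> bool} |
          [forall j : 'I_(size (gdang G)),
             s (tnth (in_tuple (gdang G)) j) == nth false x j])
    (\prod_(v : 'I_(gnv G)) fn (map_tuple s (gport v))) * neq_weight s.

Definition gadget_over (Fs : hsig -> Prop) (G : gadget) : Prop :=
  wf_gadget G /\ forall v : 'I_(gnv G), Fs (glab v).

Definition realizable (Fs : hsig -> Prop) (k : nat) (f : k.-tuple bool -> K) : Prop :=
  exists G : gadget, [/\ gadget_over Fs G, size (gdang G) = k &
    forall x : k.-tuple bool, f x = holant_val G x].

Definition premiseP (Fs : hsig -> Prop) : Prop :=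
  (forall f : 2.-tuple bool -> K, realizable Fs f ->
     exists lam : K, forall x : 2.-tuple bool,
       f x = lam * neq2 (tnth x ord0) (tnth x (inord 1))) /\
  (forall f : 4.-tuple bool -> K, realizable Fs f ->
     exists (lam : K) (tau : 'S_4), forall x : 4.-tuple bool,
       f x = lam * neq2 (tnth x (tau (inord 0))) (tnth x (tau (inord 1)))
                 * neq2 (tnth x (tau (inord 2))) (tnth x (tau (inord 3)))).

Definition closed_network (F : hsig) (n : nat) (G : gadget) : Prop :=
  wf_gadget G /\ gdang G = [::] /\ gnv G = n /\ forall v : 'I_(gnv G), glab v = F.
End Holant.

(* Main.v *)
Require Import Defs.
From HB Require Import structures.
From mathcomp Require Import all_boot all_order all_algebra all_fingroup.
From mathcomp Require Import complex.
From mathcomp Require Import reals.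
From Stdlib Require Import FunctionalExtensionality Classical.
Import GRing.Theory Num.Theory.
Local Open Scope ring_scope.
Local Open Scope complex_scope.
Set Implicit Arguments. Unset Strict Implicit. Unset Printing Implicit Defensive.


Section A.
Variable K : comNzRingType.

Lemma neq2E (x y : bool) : neq2 K x y = (x != y)%:R.
Proof. by rewrite /neq2; case: (x != y). Qed.

Lemma prod_bool (I : finType) (b : I -> bool) :
  \prod_(i : I) ((b i)%:R : K) = ([forall i, b i])%:R.
Proof.
case: (boolP [forall i, b i]) => H.
  by apply: big1 => i _; move/forallP: H => /(_ i) ->.
move/forallPn: H => [i Hi].
by rewrite (bigD1 i) //= (negbTE Hi) mul0r.
Qed.

Definition okw (G : gadget K) (s : {ffun 'I_(gm G) -> bool}) (h : 'I_(gm G)) :=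
  match @gpair _ G h with Some h' => s h != s h' | None => true end.

Definition okw' (G : gadget K) (s : {ffun 'I_(gm G) -> bool}) (h : 'I_(gm G)) :=
  match @gpair _ G h with Some h' => (h < h')%N ==> (s h != s h') | None => true end.

Lemma neq_weightE (G : gadget K) (s : {ffun 'I_(gm G) -> bool}) :
  (forall h h', @gpair _ G h = Some h' -> h' != h /\ @gpair _ G h' = Some h) ->
  neq_weight s = ([forall h, okw s h])%:R.
Proof.
move=> Hs; rewrite /neq_weight.
have -> : \prod_h (match gpair h with
     | Some h' => if (h < h')%N then neq2 K (s h) (s h') else 1
     | None => 1 end) =
   \prod_h ((okw' s h)%:R : K).
  apply: eq_bigr => h _; rewrite /okw'; case: (gpair h) => [h'|] //.
  by case: (h < h')%N; rewrite /= ?neq2E.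
rewrite prod_bool; suff -> : [forall h, okw' s h] = [forall h, okw s h] by [].
apply/forallP/forallP => H h; rewrite /okw /okw'.
  case E: (gpair h) => [h'|] //.
  have := H h; rewrite /okw' E.
  case: (ltngtP h h') => [_ /= //| lt _ | eq]; last first.
    by have [/eqP ne _] := Hs _ _ E; case: ne; apply: val_inj.
  have [_ E'] := Hs _ _ E.
  by have := H h'; rewrite /okw' E' lt /= eq_sym.
have := H h; rewrite /okw; case: (gpair h) => // h' ->; exact: implybT.
Qed.
End A.


Section B.
Variables (K : comNzRingType) (F : hsig K) (n : nat).
Definition slot := ('I_n * 'I_(ar F))%type.

Definition canon (p : slot -> slot) (D : seq slot) : gadget K :=
  @Gadget K #|{: slot}| n (fun _ => F)
    (fun v => [tuple enum_rank ((v, i) : slot) | i < ar F])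
    (fun h => if enum_val h \in D then None else Some (enum_rank (p (enum_val h))))
    (map enum_rank D).

Variables (p : slot -> slot) (D : seq slot).
Hypotheses (pI : involutive p) (pF : forall x, p x != x) (Du : uniq D)
  (Dc : forall x, (p x \in D) = (x \in D)).

Lemma canon_pair h h' : @gpair _ (canon p D) h = Some h' ->
   h' != h /\ @gpair _ (canon p D) h' = Some h.
Proof.
rewrite /=; case: ifP => // HD [<-]; split.
  apply/negP => /eqP /(congr1 enum_val); rewrite enum_rankK => /eqP.
  by rewrite (negbTE (pF _)).
by rewrite enum_rankK Dc HD pI enum_valK.
Qed.

Lemma canon_wf : wf_gadget (canon p D).
Proof.
split.
  move=> v w i j /=; rewrite !tnth_mktuple => /enum_rank_inj [-> ->]; by [].
split.
  move=> h /=; exists (enum_val h).1, (enum_val h).2.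
  by rewrite tnth_mktuple -surjective_pairing enum_valK.
split; first exact: canon_pair.
split; first by rewrite map_inj_uniq //; exact: enum_rank_inj.
move=> h /=; rewrite -{1}(enum_valK h) mem_map; last exact: enum_rank_inj.
by case: ifP.
Qed.

Lemma canon_over (Fs : hsig K -> Prop) : Fs F -> gadget_over Fs (canon p D).
Proof. by move=> HF; split; [exact: canon_wf | move=> v]. Qed.

Definition Wc (s : {ffun 'I_#|{: slot}| -> bool}) : bool :=
  [forall h, (enum_val h \notin D) ==> (s h != s (enum_rank (p (enum_val h))))].

Lemma canon_weight s : @neq_weight _ (canon p D) s = (Wc s)%:R.
Proof.
rewrite (neq_weightE s canon_pair); congr (nat_of_bool _)%:R.
apply: eq_forallb => h; rewrite /okw /=; by case: ifP.
Qed.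

End B.


Section C.
Variables (K : comNzRingType).

Definition Aterm (G : gadget K) (s : {ffun 'I_(gm G) -> bool}) :=
  (\prod_(v : 'I_(gnv G)) fn (map_tuple s (gport v))) * neq_weight s.

Lemma split_sum (G : gadget K) (g : (size (gdang G)).-tuple bool -> K) :
  \sum_(z : (size (gdang G)).-tuple bool) holant_val G z * g z =
  \sum_(s : {ffun 'I_(gm G) -> bool}) Aterm s * g (map_tuple s (in_tuple (gdang G))).
Proof.
rewrite /holant_val.
under eq_bigr do rewrite mulr_suml big_mkcond /=.
rewrite exchange_big /=; apply: eq_bigr => s _.
rewrite (bigD1 (map_tuple s (in_tuple (gdang G)))) //= ifT; last first.
  apply/forallP => j; set x0 := tnth _ j; by rewrite (nth_map x0) // {1}/x0 (tnth_nth x0).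
rewrite [X in _ + X]big1 ?addr0 //.
move=> z Hz; rewrite ifF //; apply: contraNF Hz => /forallP H.
apply/eqP/eq_from_tnth => j; rewrite tnth_map (tnth_nth false z).
by rewrite (eqP (H j)).
Qed.

Lemma holant_closed (G : gadget K) : gdang G = [::] ->
  holant_val G [::] = \sum_(s : {ffun 'I_(gm G) -> bool}) Aterm s.
Proof.
move=> E; rewrite /holant_val; apply: eq_bigl => s.
by apply/forallP => j; exfalso; move: j; rewrite E => -[].
Qed.
End C.


Definition okq (z : 4.-tuple bool) (a0 a1 a2 a3 : 'I_4) :=
  (tnth z a0 != tnth z a1) && (tnth z a2 != tnth z a3).

Definition za : 4.-tuple bool := [tuple false; false; true; true].
Definition zb : 4.-tuple bool := [tuple false; true; true; false].
Definition zc : 4.-tuple bool := [tuple false; true; false; true].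

Definition o0 : 'I_4 := @Ordinal 4 0 isT.
Definition o1 : 'I_4 := @Ordinal 4 1 isT.
Definition o2 : 'I_4 := @Ordinal 4 2 isT.
Definition o3 : 'I_4 := @Ordinal 4 3 isT.
Definition L4 := [:: o0; o1; o2; o3].
Lemma memL4 (a : 'I_4) : a \in L4.
Proof.
case: a => [[|[|[|[|m]]]] Hm]; rewrite ?inE;
  try (by apply/orP; (try (by left; apply/eqP/val_inj)); right; rewrite ?inE;
       apply/orP; (try (by left; apply/eqP/val_inj)); right; rewrite ?inE;
       apply/orP; (try (by left; apply/eqP/val_inj)); right; rewrite ?inE;
       apply/eqP/val_inj).
Qed.

Lemma stage1c : all (fun a0 => all (fun a1 => all (fun a2 => all (fun a3 =>
  uniq [:: a0; a1; a2; a3] ==>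
   (2 <= okq za a0 a1 a2 a3 + okq zb a0 a1 a2 a3 + okq zc a0 a1 a2 a3)%N) L4) L4) L4) L4.
Proof. by vm_compute. Qed.

Lemma stage1 (a0 a1 a2 a3 : 'I_4) : uniq [:: a0; a1; a2; a3] ->
   (2 <= okq za a0 a1 a2 a3 + okq zb a0 a1 a2 a3 + okq zc a0 a1 a2 a3)%N.
Proof.
move=> U; have /allP/(_ a0 (memL4 _))/allP/(_ a1 (memL4 _))/allP/(_ a2 (memL4 _))
   /allP/(_ a3 (memL4 _)) := stage1c.
by rewrite U.
Qed.

Definition Nt (K : comNzRingType) (t : 'S_4) (z : 4.-tuple bool) : K :=
  neq2 K (tnth z (t (inord 0))) (tnth z (t (inord 1))) *
  neq2 K (tnth z (t (inord 2))) (tnth z (t (inord 3))).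

Definition okt (z : 4.-tuple bool) (t : 'S_4) :=
  okq z (t (inord 0)) (t (inord 1)) (t (inord 2)) (t (inord 3)).

Lemma Nt_nat (K : comNzRingType) t z : Nt K t z = (okt z t)%:R.
Proof. by rewrite /Nt /okt /okq !neq2E -natrM mulnb. Qed.

Lemma uniq_t (t : 'S_4) : uniq [:: t (inord 0); t (inord 1); t (inord 2); t (inord 3)].
Proof.
have -> : [:: t (inord 0); t (inord 1); t (inord 2); t (inord 3)] =
   map t [:: inord 0; inord 1; inord 2; inord 3] by [].
rewrite map_inj_uniq; last exact: perm_inj.
by rewrite /= !inE -!val_eqE /= !inordK.
Qed.

Lemma pig (a b c a' b' c' : bool) : (2 <= a + b + c)%N -> (2 <= a' + b' + c')%N ->
  [|| a && a', b && b' | c && c'].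
Proof. by case: a; case: b; case: c; case: a'; case: b'; case: c'. Qed.

Lemma common_z (t u : 'S_4) : exists z, okt z t && okt z u.
Proof.
have := pig (stage1 (uniq_t t)) (stage1 (uniq_t u)).
by case/or3P => H; [exists za | exists zb | exists zc].
Qed.

Lemma sum_ne0 (K : numDomainType) (t u : 'S_4) :
  \sum_(z : 4.-tuple bool) Nt K t z * Nt K u z != 0.
Proof.
have [z0 H0] := common_z t u.
under eq_bigr do rewrite !Nt_nat -natrM.
rewrite -natr_sum pnatr_eq0 (bigD1 z0) //.
by case/andP: H0 => -> ->.
Qed.


Section Sw.
Variables (K : numDomainType) (F : hsig K) (n : nat).
Local Notation slot := (slot F n).

Lemma Wc_split (p : slot -> slot) a b c d s : involutive p -> p a = b -> p c = d ->
  Wc p [::] s = [&& Wc p [:: a; b; c; d] s, s (enum_rank a) != s (enum_rank b)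
                  & s (enum_rank c) != s (enum_rank d)].
Proof.
move=> pI Ha Hc; rewrite /Wc.
have Hb : p b = a by rewrite -Ha pI.
have Hd : p d = c by rewrite -Hc pI.
apply/forallP/and3P.
  move=> H.
  have H' : forall h, s h != s (enum_rank (p (enum_val h))) by move=> h; exact: (implyP (H h) isT).
  split.
  - by apply/forallP => h; apply/implyP => _; exact: H'.
  - by have := H' (enum_rank a); rewrite enum_rankK Ha.
  - by have := H' (enum_rank c); rewrite enum_rankK Hc.
move=> [/forallP W Hab Hcd] h; apply/implyP => _.
case: (boolP (enum_val h \in [:: a; b; c; d])) => Hin; last exact: (implyP (W h) Hin).
have hE : h = enum_rank (enum_val h) by rewrite enum_valK.
rewrite !inE in Hin; case/or4P: Hin => /eqP E; rewrite hE E.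
- by rewrite enum_rankK Ha.
- by rewrite enum_rankK Hb eq_sym.
- by rewrite enum_rankK Hc.
- by rewrite enum_rankK Hd eq_sym.
Qed.

Lemma Wc_ext (p p' : slot -> slot) D1 D2 s : D1 =i D2 ->
  (forall x, x \notin D1 -> p x = p' x) -> Wc p D1 s = Wc p' D2 s.
Proof.
move=> E H; apply: eq_forallb => h; rewrite -E.
by case: (boolP (enum_val h \in D1)) => //= Hn; rewrite H.
Qed.

Lemma Dc_of (p : slot -> slot) (D : seq slot) : involutive p ->
  (forall x, x \in D -> p x \in D) -> forall x, (p x \in D) = (x \in D).
Proof. by move=> pI H x; apply/idP/idP => [/H|/H //]; rewrite pI. Qed.

Definition vc (p : slot -> slot) := holant_val (canon p [::]) [::].

Definition Pr (s : {ffun 'I_#|{: slot}| -> bool}) :=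
  \prod_(v < n) @fn _ F (map_tuple s [tuple enum_rank ((v, i) : slot) | i < ar F]).

Lemma AtE (p : slot -> slot) D s : involutive p -> (forall x, p x != x) ->
  (forall x, (p x \in D) = (x \in D)) ->
  Aterm (G := canon p D) s = Pr s * (Wc p D s)%:R.
Proof. by move=> pI pF Dc; rewrite /Aterm canon_weight. Qed.

Lemma tnth4 (T : Type) (x0 : T) (t : 4.-tuple T) (i : nat) : (i < 4)%N ->
  tnth t (inord i) = nth x0 t i.
Proof. by move=> Hi; rewrite (tnth_nth x0) inordK. Qed.


Lemma vcE (p : slot -> slot) d0 d1 d2 d3 (t : 'S_4) :
  involutive p -> (forall x, p x != x) ->
  (forall x, (p x \in [:: d0; d1; d2; d3]) = (x \in [:: d0; d1; d2; d3])) ->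
  (forall s, Wc p [::] s = Wc p [:: d0; d1; d2; d3] s &&
      okt (map_tuple s (in_tuple (map enum_rank [:: d0; d1; d2; d3]))) t) ->
  vc p = \sum_(z : 4.-tuple bool) holant_val (canon p [:: d0; d1; d2; d3]) z * Nt K t z.
Proof.
move=> pI pF Dc HW.
rewrite (split_sum (G := canon p [:: d0; d1; d2; d3]) (Nt K t)).
rewrite /vc holant_closed //; apply: eq_bigr => s _.
rewrite (AtE _ pI pF) // (AtE _ pI pF Dc) HW Nt_nat.
have nb : forall a b : bool, ((a && b)%:R : K) = a%:R * b%:R.
  by case; case; rewrite ?mulr1 ?mulr0.
by rewrite nb mulrA.
Qed.


Lemma switch (Fs : hsig K -> Prop) : premiseP Fs -> Fs F ->
  forall (p p' : slot -> slot) d0 d1 d2 d3,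
  involutive p -> involutive p' -> (forall x, p x != x) -> (forall x, p' x != x) ->
  uniq [:: d0; d1; d2; d3] -> p d0 = d1 -> p d2 = d3 -> p' d0 = d2 -> p' d1 = d3 ->
  (forall x, x \notin [:: d0; d1; d2; d3] -> p x = p' x) ->
  (vc p == 0) = (vc p' == 0).
Proof.
move=> HP HF p p' d0 d1 d2 d3 pI pI' pF pF' Du H01 H23 H02 H13 Hout.
have H10 : p d1 = d0 by rewrite -H01 pI.
have H32 : p d3 = d2 by rewrite -H23 pI.
have H20 : p' d2 = d0 by rewrite -H02 pI'.
have H31 : p' d3 = d1 by rewrite -H13 pI'.
have Dc : forall x, (p x \in [:: d0; d1; d2; d3]) = (x \in [:: d0; d1; d2; d3]).
  apply: (Dc_of pI) => x; rewrite !inE; case/or4P => /eqP ->;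
  by rewrite ?H01 ?H10 ?H23 ?H32 ?inE eqxx ?orbT.
have Dc' : forall x, (p' x \in [:: d0; d1; d2; d3]) = (x \in [:: d0; d1; d2; d3]).
  apply: (Dc_of pI') => x; rewrite !inE; case/or4P => /eqP ->;
  by rewrite ?H02 ?H20 ?H13 ?H31 ?inE eqxx ?orbT.
have n10 : (inord 1 : 'I_4) != inord 0 by rewrite -val_eqE /= !inordK.
have n20 : (inord 2 : 'I_4) != inord 0 by rewrite -val_eqE /= !inordK.
have n13 : (inord 1 : 'I_4) != inord 3 by rewrite -val_eqE /= !inordK.
have n23 : (inord 2 : 'I_4) != inord 3 by rewrite -val_eqE /= !inordK.
set sg : 'S_4 := tperm (inord 1) (inord 2).
have E1 : vc p = \sum_(z : 4.-tuple bool) holant_val (canon p [:: d0; d1; d2; d3]) z * Nt K 1 z.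
  apply: (vcE pI pF Dc) => s; rewrite (Wc_split s pI H01 H23).
  rewrite /okt /okq !perm1 !tnth_map !(tnth4 (enum_rank d0)) //.
have E2 : vc p' = \sum_(z : 4.-tuple bool) holant_val (canon p' [:: d0; d1; d2; d3]) z * Nt K sg z.
  apply: (vcE pI' pF' Dc') => s; rewrite (Wc_split s pI' H02 H13).
  rewrite (@Wc_ext p' p' [:: d0; d2; d1; d3] [:: d0; d1; d2; d3]) //; last first.
    by move=> x; rewrite !inE; case: (x == d0); case: (x == d1); case: (x == d2).
  rewrite /okt /okq /sg tpermD // 1?eq_sym // tpermL tpermR tpermD // 1?eq_sym //.
  by rewrite !tnth_map !(tnth4 (enum_rank d0)).
have Ecan : forall z, holant_val (canon p' [:: d0; d1; d2; d3]) z =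
                      holant_val (canon p [:: d0; d1; d2; d3]) z.
  move=> z; rewrite /holant_val; apply: eq_bigr => s _.
  rewrite (canon_weight pI' pF' Dc') (canon_weight pI pF Dc).
  by rewrite (@Wc_ext p' p _ [:: d0; d1; d2; d3]) // => x Hx; rewrite Hout.
have [lam [tau Hf]] := HP.2 (fun z : 4.-tuple bool => holant_val (canon p [:: d0; d1; d2; d3]) z)
  (ex_intro _ (canon p [:: d0; d1; d2; d3]) (And3 (canon_over pI pF Du Dc HF) (erefl 4%N) (fun x => erefl _))).
have Hf' : forall z : 4.-tuple bool, holant_val (canon p [:: d0; d1; d2; d3]) z = lam * Nt K tau z.
  by move=> z; rewrite Hf /Nt mulrA.
rewrite E1 E2.
under eq_bigr do rewrite Hf' -mulrA.
under [X in _ = (X == 0)]eq_bigr do rewrite Ecan Hf' -mulrA.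
rewrite -!mulr_sumr !mulf_eq0 (negbTE (sum_ne0 _ _ _)) (negbTE (sum_ne0 _ _ _)).
by [].
Qed.

Lemma vc_ext (p q : slot -> slot) : involutive p -> involutive q ->
  (forall x, p x != x) -> (forall x, q x != x) -> p =1 q -> vc p = vc q.
Proof.
move=> pI qI pF qF E; rewrite /vc !holant_closed //; apply: eq_bigr => s _.
rewrite (AtE _ pI pF) // (AtE _ qI qF) //.
by rewrite (@Wc_ext p q [::] [::]).
Qed.

Lemma conn (Fs : hsig K -> Prop) : premiseP Fs -> Fs F ->
  forall m (p q : slot -> slot), involutive p -> involutive q ->
  (forall x, p x != x) -> (forall x, q x != x) ->
  (#|[set x | p x != q x]| <= m)%N -> (vc p == 0) = (vc q == 0).
Proof.
move=> HP HF; elim=> [|m IH] p q pI qI pF qF Hc.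
  case: (pickP [pred x | p x != q x]) => [x /= Hx | none].
    by move: Hc; rewrite leqn0 => /eqP/cards0_eq/setP/(_ x); rewrite !inE Hx.
  by rewrite (vc_ext pI qI pF qF) // => x; have := none x; rewrite /= => /negbFE/eqP.
case: (pickP [pred x | p x != q x]) => [x Hx | none]; last first.
  by rewrite (vc_ext pI qI pF qF) // => x; have := none x; rewrite /= => /negbFE/eqP.
rewrite /= in Hx.
pose y := q x; pose a := p x; pose b := p y.
pose p' := fun z => if z == x then y else if z == y then x else if z == a then b
                    else if z == b then a else p z.
have pinj : injective p := inv_inj pI.
have nxa : x != a by rewrite eq_sym pF.
have nyb : y != b by rewrite eq_sym pF.
have nxy : x != y by rewrite eq_sym qF.
have nay : a != y by [].
have nab : a != b by apply: contra nxy => /eqP /pinj /eqP.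
have nxb : x != b by apply: contra nay => /eqP E; rewrite /a E /b pI.
have Du : uniq [:: x; a; y; b].
  by rewrite /= !inE !negb_or nxa nxy nxb nay nab nyb.
have Hpa : p a = x by rewrite /a pI.
have Hpb : p b = y by rewrite /b pI.
have Dc : forall z, (p z \in [:: x; a; y; b]) = (z \in [:: x; a; y; b]).
  apply: (Dc_of pI) => z; rewrite !inE; case/or4P => /eqP ->;
  by rewrite ?Hpa ?Hpb -/a -/b ?inE eqxx ?orbT.
have Hout : forall z, z \notin [:: x; a; y; b] -> p z = p' z.
  move=> z; rewrite /p' !inE !negb_or => /and4P [/negbTE -> /negbTE -> /negbTE -> /negbTE ->].
  by [].
have p'x : p' x = y by rewrite /p' eqxx.
have p'y : p' y = x by rewrite /p' eq_sym (negbTE nxy) eqxx.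
have p'a : p' a = b by rewrite /p' eq_sym (negbTE nxa) (negbTE nay) eqxx.
have p'b : p' b = a by rewrite /p' eq_sym (negbTE nxb) eq_sym (negbTE nyb) eq_sym (negbTE nab) eqxx.
have p'I : involutive p'.
  move=> z; case: (boolP (z \in [:: x; a; y; b])) => Hz.
    by rewrite !inE in Hz; case/or4P: Hz => /eqP ->; rewrite ?p'x ?p'y ?p'a ?p'b.
  rewrite -(Hout z Hz) -Hout ?pI //; by rewrite Dc.
have p'F : forall z, p' z != z.
  move=> z; case: (boolP (z \in [:: x; a; y; b])) => Hz.
    rewrite !inE in Hz; case/or4P: Hz => /eqP ->; rewrite ?p'x ?p'y ?p'a ?p'b //;
    by rewrite eq_sym.
  by rewrite -Hout.
have Esw := switch HP HF pI p'I pF p'F Du (erefl a) (erefl b) p'x p'a Hout.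
rewrite Esw; apply: IH => //.
have Hsub : [set z | p' z != q z] \proper [set z | p z != q z].
  apply/properP; split; last by exists x; rewrite !inE ?Hx // p'x /y eqxx.
  apply/subsetP => z; rewrite !inE.
  case: (boolP (z \in [:: x; a; y; b])) => Hz; last by rewrite -Hout.
  rewrite !inE in Hz; case/or4P: Hz => /eqP ->; rewrite ?p'x ?p'y ?p'a ?p'b ?eqxx //.
  - move=> _; rewrite Hpa; apply/negP => /eqP E.
    by move: nay; rewrite /y E qI eqxx.
  - by rewrite /y qI eqxx.
  - move=> _; rewrite Hpb; apply/negP => /eqP E.
    by move: nxb; rewrite -[x]qI -/y E qI eqxx.
by rewrite -ltnS; apply: leq_trans Hc; exact: proper_card.
Qed.

End Sw.


Section M.
Variables (K : numDomainType) (F : hsig K) (n : nat).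
Local Notation slot := (slot F n).

Lemma model (G : gadget K) : closed_network F n G ->
  exists p : slot -> slot, [/\ involutive p, forall x, p x != x &
     holant_val G [::] = vc p].
Proof.
case: G => gm gnv glab gport gpair gdang [[W1 [W2 [W3 [_ W5]]]] [/= Hd [Hn Hl]]].
subst gnv gdang.
have El : glab = fun _ => F by apply: functional_extensionality.
subst glab.
simpl in *.
pose phi := fun x : slot => tnth (gport x.1) x.2.
have phi_inj : injective phi.
  move=> [v i] [w j]; rewrite /phi /= => /W1 [E1 E2]; subst w.
  by congr pair; apply: val_inj.
have W2' : forall h : 'I_gm, exists x : slot, phi x == h.
  by move=> h; have [v [i E]] := W2 h; exists (v, i); rewrite /phi E.
pose psi := fun h => xchoose (W2' h).
have phipsi : forall h, phi (psi h) = h by move=> h; exact/eqP/(xchooseP (W2' h)).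
have psiphi : forall x, psi (phi x) = x by move=> x; apply: phi_inj; rewrite phipsi.
pose gp := fun h : 'I_gm => odflt h (gpair h).
have gpS : forall h, gpair h = Some (gp h).
  move=> h; have := W5 h; rewrite in_nil /gp; by case: (gpair h).
have gpI : forall h, gp (gp h) = h.
  by move=> h; have [_ E] := W3 _ _ (gpS h); move: E; rewrite gpS => -[].
have gpF : forall h, gp h != h by move=> h; have [E _] := W3 _ _ (gpS h).
pose p := fun x => psi (gp (phi x)).
have phip : forall x, phi (p x) = gp (phi x) by move=> x; rewrite /p phipsi.
have pI : involutive p by move=> x; apply: phi_inj; rewrite !phip gpI.
have pF : forall x, p x != x.
  by move=> x; apply/negP => /eqP /(congr1 phi); rewrite phip => /eqP; rewrite (negbTE (gpF _)).
exists p; split => //.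
rewrite /vc !holant_closed //.
pose R := fun s : {ffun 'I_gm -> bool} => [ffun h : 'I_#|{: slot}| => s (phi (enum_val h))].
pose R' := fun s : {ffun 'I_#|{: slot}| -> bool} => [ffun h : 'I_gm => s (enum_rank (psi h))].
rewrite (reindex R); last first.
  exists R' => s _; apply/ffunP => h; rewrite !ffunE.
    by rewrite enum_rankK phipsi.
  by rewrite psiphi enum_valK.
apply: eq_bigr => s _.
rewrite (AtE _ pI pF) //.
rewrite /Aterm /=.
rewrite (neq_weightE s (G := Gadget gport gpair [::])) //.
congr (_ * _).
  apply: eq_bigr => v _; congr (fn _); apply: eq_from_tnth => i.
  by rewrite !tnth_map tnth_ord_tuple ffunE enum_rankK.
suff -> : [forall h, okw s h] = Wc p [::] (R s) by [].
apply/forallP/forallP.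
  move=> H h; apply/implyP => _; rewrite !ffunE enum_rankK phip.
  by have := H (phi (enum_val h)); rewrite /okw /= gpS.
move=> H h; rewrite /okw /= gpS.
have := H (enum_rank (psi h)); rewrite in_nil /= !ffunE !enum_rankK phip phipsi.
by [].
Qed.
End M.

Unset Implicit Arguments. Set Strict Implicit.
Theorem mainTheorem9 (R : realType) (Fs : hsig R[i] -> Prop) (F : hsig R[i]) :
  premiseP Fs -> Fs F ->
  forall n : nat, (0 < n)%N ->
    (forall G : gadget R[i], closed_network F n G -> holant_val G [::] = 0) \/
    (forall G : gadget R[i], closed_network F n G -> holant_val G [::] != 0).
Proof.
move=> HP HF n _.
case: (classic (exists G : gadget R[i], closed_network F n G /\ holant_val G [::] = 0))
  => [[G0 [C0 V0]] | N].
  left => G C.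
  have [p0 [p0I p0F E0]] := model C0.
  have [p [pI pF E]] := model C.
  apply/eqP; rewrite E (conn HP HF pI p0I pF p0F (leqnn _)) -E0 V0.
  by rewrite eqxx.
right => G C; apply/eqP => V; apply: N; exists G; split => //.
Qed.
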